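(* In the Core Tuplix Calculus $\mathbf{CTC}$ over a nonempty attribute set $A$ and a non-trivial cancellation meadow $\mathcal{D}$ (defined in the context), the following two rules are derivable: (i) for all data terms $p,q$, every data variable $u$ and every tuplix term $t$, if $\mathcal{D}\models p=q$ then $\mathbf{CTC}\vdash t[p/u]=t[q/u]$; (ii) for every tuplix term $t$, data variable $u$ and data term $p$, $\mathbf{CTC}\vdash t\oplus\gamma(u-p)=t[p/u]\oplus\gamma(u-p)$. Here $t[p/u]$ denotes replacement of all occurrences of the data variable $u$ in $t$ by $p$.
   Context: Data: a meadow is a commutative ring with unit with a total unary operation $(\cdot)^{-1}$ satisfying $(u^{-1})^{-1}=u$ and $u\cdot(u\cdot u^{-1})=u$; a non-trivial cancellation meadow additionally satisfies $0\neq 1$ and the cancellation law ($u\neq 0$ and $uv=uw$ imply $v=w$). Fix such a structure $\mathcal{D}$. Data terms are built from data variables, constants $0,1$, binary $+,\cdot$ and unary $-$, $(\cdot)^{-1}$; write $p/q$ for $p\cdot q^{-1}$ and $p-q$ for $p+(-q)$; $\mathcal{D}\models p=q$ means the identity holds for all valuations in $\mathcal{D}$. Fix a nonempty set $A$ of attributes. Tuplix terms are built from tuplix variables, constants $\epsilon$ and $\delta$, entries $a(p)$ ($a\in A$, $p$ a data term), zero tests $\gamma(p)$, and the binary operator $\oplus$. $\mathbf{CTC}$ is the two-sorted equational proof system with axioms (T1) $x\oplus y=y\oplus x$; (T2) $(x\oplus y)\oplus z=x\oplus(y\oplus z)$; (T3) $x\oplus\epsilon=x$; (T4) $x\oplus\delta=\delta$;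 (T5) $a(u)\oplus a(v)=a(u+v)$; (T6) $\gamma(u)=\gamma(u/u)$; (T7) $\gamma(0)=\epsilon$; (T8) $\gamma(1)=\delta$; (T9) $\gamma(u)\oplus\gamma(v)=\gamma(u/u+v/v)$; (T10) $\gamma(u-v)\oplus a(u)=\gamma(u-v)\oplus a(v)$ (for all $a\in A$), together with the rule (DE): for all data terms $p,q$, if $\mathcal{D}\models p=q$ then $\gamma(p)=\gamma(q)$ is derivable. *)

(* Defs.v *)
From mathcomp Require Import all_boot all_algebra.
Set Implicit Arguments. Unset Strict Implicit. Unset Printing Implicit Defensive.
Import GRing.Theory.
Local Open Scope ring_scope.

Definition is_meadow (D : comPzRingType) (inv : D -> D) : Prop :=
  (forall u : D, inv (inv u) = u) /\ (forall u : D, u * (u * inv u) = u).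

Definition is_nt_cancellation_meadow (D : comPzRingType) (inv : D -> D) : Prop :=
  [/\ is_meadow inv, (0 : D) <> 1 &
      forall u v w : D, u <> 0 -> u * v = u * w -> v = w].

Inductive dterm : Type :=
| DVar : nat -> dterm
| D0 : dterm
| D1 : dterm
| DAdd : dterm -> dterm -> dterm
| DMul : dterm -> dterm -> dterm
| DNeg : dterm -> dterm
| DInv : dterm -> dterm.

Definition DDiv (p q : dterm) : dterm := DMul p (DInv q).
Definition DSub (p q : dterm) : dterm := DAdd p (DNeg q).

Fixpoint deval (D : comPzRingType) (inv : D -> D) (rho : nat -> D) (p : dterm) : D :=
  match p with
  | DVar n => rho n
  | D0 => 0
  | D1 => 1
  | DAdd p1 p2 => deval inv rho p1 + deval inv rho p2
  | DMul p1 p2 => deval inv rho p1 * deval inv rho p2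
  | DNeg p1 => - deval inv rho p1
  | DInv p1 => inv (deval inv rho p1)
  end.

Definition dmodels (D : comPzRingType) (inv : D -> D) (p q : dterm) : Prop :=
  forall rho : nat -> D, deval inv rho p = deval inv rho q.

Fixpoint dsubst (u : nat) (p : dterm) (r : dterm) : dterm :=
  match r with
  | DVar n => if n == u then p else DVar n
  | D0 => D0
  | D1 => D1
  | DAdd r1 r2 => DAdd (dsubst u p r1) (dsubst u p r2)
  | DMul r1 r2 => DMul (dsubst u p r1) (dsubst u p r2)
  | DNeg r1 => DNeg (dsubst u p r1)
  | DInv r1 => DInv (dsubst u p r1)
  end.

Inductive tterm (A : Type) : Type :=
| TVar : nat -> tterm A
| TEps : tterm A
| TDelta : tterm A
| TEntry : A -> dterm -> tterm A
| TGamma : dterm -> tterm A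
| TPlus : tterm A -> tterm A -> tterm A.

Arguments TEps {A}.
Arguments TDelta {A}.
Arguments TVar {A}.
Arguments TGamma {A}.

Fixpoint tsubst (A : Type) (u : nat) (p : dterm) (t : tterm A) : tterm A :=
  match t with
  | TVar x => TVar x
  | TEps => TEps
  | TDelta => TDelta
  | TEntry a r => TEntry a (dsubst u p r)
  | TGamma r => TGamma (dsubst u p r)
  | TPlus t1 t2 => TPlus (tsubst u p t1) (tsubst u p t2)
  end.

(* Equational logic on tuplix terms (reflexivity, symmetry, transitivity,
   congruence for the only tuplix-level operator (+)), with all substitution
   instances of axioms T1-T10 (axiom schemas over arbitrary tuplix terms
   x,y,z and data terms u,v), together with the rule (DE). *)
Inductive CTC (A : Type) (D : comPzRingType) (inv : D -> D) :
    tterm A -> tterm A -> Prop :=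
| ctc_refl t : CTC inv t t
| ctc_sym t s : CTC inv t s -> CTC inv s t
| ctc_trans t s r : CTC inv t s -> CTC inv s r -> CTC inv t r
| ctc_cong_plus t1 t2 s1 s2 :
    CTC inv t1 s1 -> CTC inv t2 s2 -> CTC inv (TPlus t1 t2) (TPlus s1 s2)
| ctc_T1 x y : CTC inv (TPlus x y) (TPlus y x)
| ctc_T2 x y z : CTC inv (TPlus (TPlus x y) z) (TPlus x (TPlus y z))
| ctc_T3 x : CTC inv (TPlus x TEps) x
| ctc_T4 x : CTC inv (TPlus x TDelta) TDelta
| ctc_T5 (a : A) u v : CTC inv (TPlus (TEntry a u) (TEntry a v)) (TEntry a (DAdd u v))
| ctc_T6 u : CTC inv (TGamma u) (TGamma (DDiv u u))
| ctc_T7 : CTC inv (TGamma D0) TEps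
| ctc_T8 : CTC inv (TGamma D1) TDelta
| ctc_T9 u v : CTC inv (TPlus (TGamma u) (TGamma v))
                       (TGamma (DAdd (DDiv u u) (DDiv v v)))
| ctc_T10 (a : A) u v : CTC inv (TPlus (TGamma (DSub u v)) (TEntry a u))
                               (TPlus (TGamma (DSub u v)) (TEntry a v))
| ctc_DE p q : dmodels inv p q -> CTC inv (TGamma p) (TGamma q).

(* Main.v *)
Require Import Defs.
From mathcomp Require Import all_boot all_algebra.
Set Implicit Arguments. Unset Strict Implicit. Unset Printing Implicit Defensive.
Import GRing.Theory.
Local Open Scope ring_scope.

Lemma deval_ext (D : comPzRingType) (inv : D -> D) (r1 r2 : nat -> D) p :
  (forall n, r1 n = r2 n) -> deval inv r1 p = deval inv r2 p.
Proof.
move=> H; elim: p => [n|||p1 IH1 p2 IH2|p1 IH1 p2 IH2|p1 IH|p1 IH] /=;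
  by rewrite ?IH1 ?IH2 ?IH.
Qed.

Lemma deval_dsubst (D : comPzRingType) (inv : D -> D) (rho : nat -> D) u p r :
  deval inv rho (dsubst u p r) =
  deval inv (fun n => if n == u then deval inv rho p else rho n) r.
Proof.
elim: r => [n|||r1 IH1 r2 IH2|r1 IH1 r2 IH2|r1 IH|r1 IH] /=;
  rewrite ?IH1 ?IH2 ?IH //.
by case: (n == u).
Qed.

Lemma deval_same (D : comPzRingType) (inv : D -> D) (rho : nat -> D) u p r :
  rho u = deval inv rho p -> deval inv rho (dsubst u p r) = deval inv rho r.
Proof.
move=> H; rewrite deval_dsubst; apply: deval_ext => n.
by case: eqP => // ->.
Qed.

Lemma ctc_entry_DE (A : Type) (D : comPzRingType) (inv : D -> D) (a : A) r r' :
  dmodels inv r r' -> CTC inv (TEntry a r) (TEntry a r').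
Proof.
move=> H.
have Hg : CTC inv (@TGamma A (DSub r r')) TEps.
  apply: (ctc_trans _ (ctc_T7 A inv)).
  apply: ctc_DE => rho /=. by rewrite H subrr.
apply: ctc_trans (ctc_sym (ctc_T3 inv _)) _.
apply: ctc_trans (ctc_cong_plus (ctc_refl _ _) (ctc_sym Hg)) _.
apply: ctc_trans (ctc_T1 _ _ _) _.
apply: ctc_trans (ctc_T10 _ _ _ _) _.
apply: ctc_trans (ctc_T1 _ _ _) _.
apply: ctc_trans (ctc_cong_plus (ctc_refl _ _) Hg) _.
exact: ctc_T3.
Qed.

Lemma part1 (A : Type) (D : comPzRingType) (inv : D -> D) p q u (t : tterm A) :
  dmodels inv p q -> CTC inv (tsubst u p t) (tsubst u q t).
Proof.
move=> H; elim: t => [x|||a r|r|t1 IH1 t2 IH2] /=; try exact: ctc_refl.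
- apply: ctc_entry_DE => rho; rewrite !deval_dsubst H.
  by apply: deval_ext.
- apply: ctc_DE => rho; rewrite !deval_dsubst H.
  by apply: deval_ext.
- exact: ctc_cong_plus.
Qed.

Lemma unitP (D : comPzRingType) (inv : D -> D) :
  is_nt_cancellation_meadow inv -> forall z : D, z != 0 -> z * inv z = 1.
Proof.
case=> [[_ Hm] _ Hc] z /eqP Hz; apply: (Hc z) => //.
by rewrite Hm mulr1.
Qed.

Lemma collapse (A : Type) (D : comPzRingType) (inv : D -> D) :
  is_nt_cancellation_meadow inv -> (1 + 1 : D) = 0 ->
  forall t s : tterm A, CTC inv t s.
Proof.
move=> M H2.
have M' := M; case: M' => [_ H10 _].
have i1 : (1 : D) * inv 1 = 1 by apply: unitP => //; apply/eqP; auto.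
have Hed : CTC inv (@TEps A) TDelta.
  apply: ctc_trans (ctc_sym (ctc_T7 A inv)) _.
  apply: ctc_trans (ctc_DE A (p := D0) (q := DAdd (DDiv D1 D1) (DDiv D1 D1)) _) _.
    by move=> rho /=; rewrite i1 H2.
  apply: ctc_trans (ctc_sym (ctc_T9 _ _ _ _)) _.
  apply: ctc_trans (ctc_cong_plus (ctc_T8 _ _) (ctc_T8 _ _)) _.
  exact: ctc_T4.
have Ht : forall t : tterm A, CTC inv t TDelta.
  move=> t; apply: ctc_trans (ctc_sym (ctc_T3 inv _)) _.
  apply: ctc_trans (ctc_cong_plus (ctc_refl _ _) Hed) _.
  exact: ctc_T4.
by move=> t s; apply: ctc_trans (Ht t) (ctc_sym (Ht s)).
Qed.

Lemma q01 (D : comPzRingType) (inv : D -> D) :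
  is_nt_cancellation_meadow inv -> forall z : D,
  (z = 0 /\ z * inv z = 0) \/ (z != 0 /\ z * inv z = 1).
Proof.
move=> M z; have [->|nz] := eqVneq z 0; first by left; rewrite mul0r.
by right; split => //; apply: unitP.
Qed.

Lemma W0_same (D : comPzRingType) (inv : D -> D) rho u p r :
  rho u + - deval inv rho p = 0 -> deval inv rho (dsubst u p r) = deval inv rho r.
Proof.
move=> H; apply: deval_same; apply/eqP; rewrite -subr_eq0; exact/eqP.
Qed.

Lemma rot (A : Type) (D : comPzRingType) (inv : D -> D) (x y z : tterm A) :
  CTC inv (TPlus x (TPlus y z)) (TPlus y (TPlus z x)).
Proof. exact: ctc_trans (ctc_T1 _ _ _) (ctc_T2 _ _ _ _). Qed.

Lemma swap4 (A : Type) (D : comPzRingType) (inv : D -> D) (x y z z' : tterm A) :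
  CTC inv (TPlus (TPlus x y) (TPlus z z')) (TPlus (TPlus x z) (TPlus y z')).
Proof.
apply: ctc_trans (ctc_T2 _ _ _ _) _.
apply: ctc_trans (ctc_cong_plus (ctc_refl _ _) (ctc_sym (ctc_T2 _ _ _ _))) _.
apply: ctc_trans (ctc_cong_plus (ctc_refl _ _)
   (ctc_cong_plus (ctc_T1 _ _ _) (ctc_refl _ _))) _.
apply: ctc_trans (ctc_cong_plus (ctc_refl _ _) (ctc_T2 _ _ _ _)) _.
exact: ctc_sym (ctc_T2 _ _ _ _).
Qed.

Lemma entry_case (A : Type) (D : comPzRingType) (inv : D -> D) (a : A) u p r :
  is_nt_cancellation_meadow inv ->
  CTC inv (TPlus (TEntry a r) (TGamma (DSub (DVar u) p)))
          (TPlus (TEntry a (dsubst u p r)) (TGamma (DSub (DVar u) p))).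
Proof.
move=> M.
set w := DSub (DVar u) p.
set s := DSub r (dsubst u p r).
set a' := DMul w (DSub D1 (DDiv s s)).
have Hs : CTC inv (@TGamma A w) (TPlus (TGamma a') (TGamma s)).
  apply: ctc_trans (ctc_T6 _ _ _) _.
  apply: ctc_trans _ (ctc_sym (ctc_T9 _ _ _ _)).
  apply: ctc_DE => rho /=.
  set W := rho u + - deval inv rho p.
  have [[W0 _]|[Wn Wi]] := q01 M W.
    have e := W0_same r W0.
    by rewrite W0 e subrr !mul0r addr0.
  rewrite Wi.
  have [[S0 Si]|[Sn Si]] := q01 M (deval inv rho r + - deval inv rho (dsubst u p r)).
    by rewrite Si subr0 mulr1 Wi addr0.
  by rewrite Si subrr mulr0 mul0r add0r.
apply: ctc_trans (ctc_cong_plus (ctc_refl _ _) Hs) _.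
apply: ctc_trans (rot _ _ _ _) _.
apply: ctc_trans (ctc_cong_plus (ctc_refl _ _) (ctc_T10 _ _ _ _)) _.
apply: ctc_trans (ctc_sym (rot _ _ _ _)) _.
exact: ctc_cong_plus (ctc_refl _ _) (ctc_sym Hs).
Qed.

Lemma two_nz (D : comPzRingType) (inv : D -> D) :
  is_nt_cancellation_meadow inv -> (1 + 1 : D) <> 0 ->
  forall x y : D, x * inv x = 1 -> (y * inv y + x * inv x) * inv (y * inv y + x * inv x) = 1.
Proof.
move=> M H2 x y ->.
case: (q01 M y) => [[_ ->]|[_ ->]]; apply: unitP => //; apply/eqP.
  rewrite add0r; case: M => _ H10 _ H; by apply: H10; rewrite H.
exact: H2.
Qed.

Lemma gamma_case (A : Type) (D : comPzRingType) (inv : D -> D) u p r :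
  is_nt_cancellation_meadow inv -> (1 + 1 : D) <> 0 ->
  CTC inv (TPlus (@TGamma A r) (TGamma (DSub (DVar u) p)))
          (TPlus (TGamma (dsubst u p r)) (TGamma (DSub (DVar u) p))).
Proof.
move=> M H2.
apply: ctc_trans (ctc_T9 _ _ _ _) _.
apply: ctc_trans (ctc_T6 _ _ _) _.
apply: ctc_trans _ (ctc_sym (ctc_T9 _ _ _ _)).
apply: ctc_trans _ (ctc_sym (ctc_T6 _ _ _)).
apply: ctc_DE => rho /=.
set W := rho u + - deval inv rho p.
have [[W0 _]|[Wn Wi]] := q01 M W.
  by rewrite (W0_same r W0).
by rewrite (two_nz M H2 (deval inv rho r) Wi) (two_nz M H2 (deval inv rho (dsubst u p r)) Wi).
Qed.

Lemma idem (A : Type) (D : comPzRingType) (inv : D -> D) w :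
  is_nt_cancellation_meadow inv -> (1 + 1 : D) <> 0 ->
  CTC inv (TPlus (@TGamma A w) (TGamma w)) (TGamma w).
Proof.
move=> M H2.
apply: ctc_trans (ctc_T9 _ _ _ _) _.
apply: ctc_trans (ctc_T6 _ _ _) _.
apply: ctc_trans _ (ctc_sym (ctc_T6 _ _ _)).
apply: ctc_DE => rho /=.
have [[W0 Wi]|[Wn Wi]] := q01 M (deval inv rho w).
  by rewrite Wi addr0 mul0r.
by rewrite (two_nz M H2 _ Wi) Wi.
Qed.

Theorem mainTheorem4 (A : Type) (D : comPzRingType) (inv : D -> D) :
  inhabited A ->
  is_nt_cancellation_meadow inv ->
  (forall (p q : dterm) (u : nat) (t : tterm A),
      dmodels inv p q -> CTC inv (tsubst u p t) (tsubst u q t)) /\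
  (forall (t : tterm A) (u : nat) (p : dterm),
      CTC inv (TPlus t (TGamma (DSub (DVar u) p)))
              (TPlus (tsubst u p t) (TGamma (DSub (DVar u) p)))).
Proof.
move=> _ M; split; first by move=> *; apply: part1.
move=> t u p.
have [H2|/eqP H2] := eqVneq (1 + 1 : D) 0; first by apply: collapse.
elim: t => [x|||a r|r|t1 IH1 t2 IH2] /=; try exact: ctc_refl.
- exact: entry_case.
- exact: gamma_case.
- set g := TGamma (DSub (DVar u) p).
  apply: ctc_trans (ctc_cong_plus (ctc_refl _ _) (ctc_sym (idem _ _ M H2))) _.
  apply: ctc_trans (swap4 _ _ _ _ _) _.
  apply: ctc_trans (ctc_cong_plus IH1 IH2) _.
  apply: ctc_trans (ctc_sym (swap4 _ _ _ _ _)) _.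
  exact: ctc_cong_plus (ctc_refl _ _) (idem _ _ M H2).
Qed.
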